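(* Let $G$ be a finite nonabelian group with $Z(G)\neq 1$. Then $\mathcal{D}(G)-\mathcal{D}(Z(G))\ge 3$.
   Context: $\mathcal{D}(X)$ denotes the number of conjugacy classes of nontrivial subgroups $Y$ of the finite group $X$ with $N_X(Y)\neq Y$. $Z(G)$ is the center of $G$. *)

(* Defs.v *)
From mathcomp Require Import all_boot all_fingroup all_solvable.
Set Implicit Arguments. Unset Strict Implicit. Unset Printing Implicit Defensive.
Local Open Scope group_scope.

Definition nonselfnorm_subgroups (gT : finGroupType) (X : {set gT}) :
  {set {set gT}} :=
  [set Y : {set gT} | [&& group_set Y, Y \subset X, Y != 1 & 'N_X(Y) != Y]].

Definition calD (gT : finGroupType) (X : {set gT}) : nat :=
  #|[set Y :^: X | Y in nonselfnorm_subgroups X]|.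

(* Main.v *)
Require Import Defs.
From mathcomp Require Import all_boot all_fingroup all_solvable.
From mathcomp Require Import zify.
Set Implicit Arguments. Unset Strict Implicit. Unset Printing Implicit Defensive.
Lemma arith1 (z c i s : nat) : 1 <= z -> 2 <= i -> z <= c -> c * i <= z + s -> s = (c - z) * i -> False.
Proof. nia. Qed.
Lemma arith2 (z c i s : nat) : 1 <= z -> 2 * z <= c  -> s = (c - z) * i -> c * i <= 2 * s.
Proof. nia. Qed.

Lemma card_disjU (T : finType) (A B : {set T}) :
  A :&: B = set0 -> #|A :|: B| = (#|A| + #|B|)%N.
Proof. by move=> dAB; rewrite cardsU dAB cards0 subn0. Qed.


Local Open Scope group_scope.

Section Count.
Variables (gT : finGroupType) (G : {group gT}).
Hypotheses (nabG : ~~ abelian G) (ntZ : 'Z(G) != 1).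

Lemma Z_neq_G : ('Z(G) : {set gT}) != G.
Proof.
apply: contra nabG => /eqP <-; exact: center_abelian.
Qed.

Lemma conjugates_central (Y : {set gT}) (X : {group gT}) :
  Y \subset 'Z(G) -> X \subset G -> Y :^: X = [set Y].
Proof.
move=> sYZ sXG; have nYX : X \subset 'N(Y).
  apply: cents_norm; rewrite centsC; apply: subset_trans sYZ _.
  by apply: subset_trans (subsetIr _ _) _; apply: centS.
apply/setP=> W; rewrite inE; apply/imsetP/eqP => [[g Xg ->]|->].
  exact: (normP (subsetP nYX g Xg)).
by exists 1; rewrite ?group1 ?conjsg1.
Qed.

Lemma central_in_ns (Y : {set gT}) :
  Y \in nonselfnorm_subgroups 'Z(G) -> Y \in nonselfnorm_subgroups G.
Proof.
rewrite !inE => /and4P[gY sYZ ntY _]; rewrite gY ntY /=.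
have sYG : Y \subset G by apply: subset_trans sYZ (center_sub G).
rewrite sYG /=.
have -> : 'N_G(Y) = G.
  apply/setIidPl; apply: cents_norm; rewrite centsC.
  by apply: subset_trans sYZ _; apply: subsetIr.
apply: contra Z_neq_G => /eqP eYG; rewrite eqEsubset center_sub /=.
by rewrite {1}eYG.
Qed.

Lemma Z_in_ns : ('Z(G) : {set gT}) \in nonselfnorm_subgroups G.
Proof.
rewrite inE groupP center_sub ntZ /=.
have -> : 'N_G('Z(G)) = G by apply/setIidPl; apply: normal_norm; apply: center_normal.
by rewrite eq_sym Z_neq_G.
Qed.

Lemma Z_notin_nsZ : ('Z(G) : {set gT}) \notin nonselfnorm_subgroups 'Z(G).
Proof.
rewrite inE; apply/negP => /and4P[_ _ _].
by rewrite (setIidPl (normG _)) eqxx.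
Qed.

Lemma count_final (Y1 Y2 : {set gT}) :
  Y1 \in nonselfnorm_subgroups G -> Y2 \in nonselfnorm_subgroups G ->
  ~~ (Y1 \subset 'Z(G)) -> ~~ (Y2 \subset 'Z(G)) -> Y1 :^: G != Y2 :^: G ->
  (calD 'Z(G) + 3 <= calD G)%N.
Proof.
move=> nsY1 nsY2 nzY1 nzY2 neq12.
pose S := [set [set Y] | Y in nonselfnorm_subgroups 'Z(G)].
have eS : [set Y :^: 'Z(G) | Y in nonselfnorm_subgroups 'Z(G)] = S.
  apply: eq_in_imset => Y; rewrite inE => /and4P[_ sYZ _ _].
  by apply: conjugates_central => //; apply: center_sub.
pose T := [set Y :^: G | Y in nonselfnorm_subgroups G].
have eZ : ('Z(G) : {set gT}) :^: G = [set 'Z(G) : {set gT}].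
  by apply: conjugates_central.
have Y1in : Y1 \in Y1 :^: G by apply/imsetP; exists 1; rewrite ?group1 ?conjsg1.
have Y2in : Y2 \in Y2 :^: G by apply/imsetP; exists 1; rewrite ?group1 ?conjsg1.
have sub : [set 'Z(G) : {set gT}] |: (Y1 :^: G |: (Y2 :^: G |: S)) \subset T.
  apply/subsetP => W; rewrite !inE => /or4P[/eqP->|/eqP->|/eqP->|].
  - by rewrite -eZ; apply: imset_f; apply: Z_in_ns.
  - exact: imset_f.
  - exact: imset_f.
  - case/imsetP => Y nsY ->; rewrite -(@conjugates_central Y G); last exact: subxx.
      by apply: imset_f; apply: central_in_ns.
    by move: nsY; rewrite inE => /and4P[].
rewrite /calD -/T eS; apply: leq_trans (subset_leq_card sub).
rewrite !cardsU1 addnC !addnA leq_add2r.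
have notS (W : {set gT}) : W \in W :^: G -> ~~ (W \subset 'Z(G)) -> W :^: G \notin S.
  move=> Win nzW; apply/imsetP => [[Y nsY eW]]; move: Win; rewrite eW inE => /eqP eWY.
  by move: nsY nzW; rewrite inE eWY => /and4P[_ -> _ _].
have notZS : [set 'Z(G) : {set gT}] \notin S.
  apply/imsetP => [[Y nsY /setP/(_ ('Z(G) : {set gT}))]]; rewrite !inE eqxx => /esym/eqP eY.
  by move: nsY; rewrite -eY (negbTE Z_notin_nsZ).
have neqZ (W : {set gT}) : W \in W :^: G -> ~~ (W \subset 'Z(G)) -> [set 'Z(G) : {set gT}] != W :^: G.
  move=> Win nzW; apply/eqP => eW; move: Win; rewrite -eW inE => /eqP eWZ.
  by move: nzW; rewrite eWZ subxx.
rewrite !in_setU1 !negb_or (notS _ Y1in nzY1) (notS _ Y2in nzY2) notZS neq12.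
by rewrite (neqZ _ Y1in nzY1) (neqZ _ Y2in nzY2).
Qed.

End Count.
Section T1.
Variables (gT : finGroupType) (G : {group gT}).
Hypothesis H0 : forall Y : {group gT}, 'Z(G) \proper Y -> Y \subset G -> 'N_G(Y) = Y.

Let Z := 'Z(G).

Lemma ZsubC x : x \in G -> Z \subset 'C_G[x].
Proof.
move=> Gx; rewrite subsetI center_sub /= sub_cent1.
have cGZ : G \subset 'C(Z) by rewrite centsC subsetIr.
exact: (subsetP cGZ).
Qed.

Lemma C_abelian x : x \in G -> x \notin Z -> abelian 'C_G[x].
Proof.
move=> Gx nZx; set C := 'C_G[x].
have sZZC : Z \subset 'Z(C).
  rewrite subsetI ZsubC //= centsC.
  apply: subset_trans (subsetIl G 'C[x]) _; rewrite centsC; exact: subsetIr.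
have xZC : x \in 'Z(C).
  by rewrite inE -sub_cent1 subsetIr andbT inE Gx cent1id.
have prZ : Z \proper 'Z(C) by rewrite properE sZZC; apply/subsetPn; exists x.
have eN := H0 prZ (subset_trans (center_sub C) (subsetIl _ _)).
have sCN : C \subset 'N_G('Z(C)).
  by rewrite subsetI subsetIl normal_norm ?center_normal.
rewrite eN in sCN; rewrite /abelian; exact: subset_trans sCN (subsetIr _ _).
Qed.

Lemma C_max x (K : {group gT}) : x \in G -> x \notin Z -> Z \proper K ->
  K \subset 'C_G[x] -> (K : {set gT}) = 'C_G[x].
Proof.
move=> Gx nZx prK sKC; have abC := C_abelian Gx nZx.
have eN := H0 prK (subset_trans sKC (subsetIl _ _)).
have sCN : 'C_G[x] \subset 'N_G(K).
  rewrite subsetI subsetIl cents_norm //; exact: subset_trans abC (centS sKC).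
apply/eqP; rewrite eqEsubset sKC /=; by rewrite -eN.
Qed.

Lemma C_eq x y : x \in G -> x \notin Z -> y \in 'C_G[x] -> y \notin Z ->
  'C_G[y] = 'C_G[x].
Proof.
move=> Gx nZx Cy nZy; have Gy : y \in G by move: Cy; rewrite inE => /andP[].
symmetry; apply: (C_max (K := 'C_G[x]%G) Gy nZy).
  rewrite properE ZsubC //=; apply/subsetPn; exists x => //.
  by rewrite inE Gx cent1id.
rewrite subsetI subsetIl sub_cent1; exact: (subsetP (C_abelian Gx nZx)).
Qed.

Lemma C_conj x g : g \in G -> 'C_G[x ^ g] = 'C_G[x] :^ g.
Proof. by move=> Gg; rewrite conjIg cent1J conjGid. Qed.

Lemma C_selfnorm x : x \in G -> x \notin Z -> 'N_G('C_G[x]) = 'C_G[x].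
Proof.
move=> Gx nZx; apply: H0; last exact: subsetIl.
rewrite properE ZsubC //=; apply/subsetPn; exists x => //.
by rewrite inE Gx cent1id.
Qed.

Lemma C_TI x : x \in G -> x \notin Z -> normedTI ('C_G[x] :\: Z) G 'C_G[x].
Proof.
move=> Gx nZx; apply/normedTI_memJ_P; split.
- apply/set0Pn; exists x; by rewrite inE nZx /= inE Gx cent1id.
- exact: subsetIl.
- move=> a g; rewrite inE => /andP[nZa Ca] Gg; apply/idP/idP.
    rewrite inE => /andP[nZag Cag].
    have e1 := C_eq Gx nZx Cag nZag; have e2 := C_eq Gx nZx Ca nZa.
    rewrite C_conj // e2 in e1.
    suff : g \in 'N_G('C_G[x]) by rewrite C_selfnorm.
    by rewrite inE Gg; apply/normP.
  move=> Cg; have -> : a ^ g = a.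
    by rewrite /conjg (centsP (C_abelian Gx nZx) a Ca g Cg) mulKg.
  by rewrite inE nZa.
Qed.

Let S x := class_support ('C_G[x] :\: Z) G.

Lemma S_sub x : S x \subset G.
Proof.
apply/subsetP => w /imset2P[a g]; rewrite inE => /andP[_ /setIP[Ga _]] Gg ->.
exact: groupJ.
Qed.

Lemma nZG : G \subset 'N(Z).
Proof. exact: normal_norm (center_normal G). Qed.

Lemma ZS0 x : Z :&: S x = set0.
Proof.
apply/setP => w; rewrite inE in_set0; apply/andP => [[Zw /imset2P[a g]]].
rewrite inE => /andP[nZa _] Gg ew; move: Zw; rewrite ew memJ_norm ?(subsetP nZG) //.
by rewrite (negbTE nZa).
Qed.

Lemma card_S x : x \in G -> x \notin Z ->
  #|S x| = ((#|'C_G[x]| - #|Z|) * #|G : 'C_G[x]|)%N.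
Proof.
move=> Gx nZx; rewrite /S (card_support_normedTI (C_TI Gx nZx)) cardsD.
by rewrite (setIidPr (ZsubC Gx)).
Qed.

Lemma CZ_card x : x \in G -> x \notin Z -> (2 * #|Z| <= #|'C_G[x]|)%N.
Proof.
move=> Gx nZx; rewrite -(Lagrange (ZsubC Gx)) mulnC leq_mul2l.
rewrite indexg_gt1 orbC; apply/orP; left; apply/subsetPn; exists x => //.
by rewrite inE Gx cent1id.
Qed.

Lemma GC_index x : x \in G -> x \notin Z -> (2 <= #|G : 'C_G[x]|)%N.
Proof.
move=> Gx nZx; rewrite indexg_gt1; apply: contra nZx => sGC.
rewrite inE Gx /= -sub_cent1; apply: subset_trans sGC (subsetIr _ _).
Qed.

Lemma T1_false : ~~ abelian G -> False.
Proof.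
move=> nabG.
have [x Gx nZx] : exists2 x, x \in G & x \notin Z.
  apply/subsetPn; apply: contra nabG => sGZ.
  rewrite /abelian; exact: subset_trans sGZ (subsetIr _ _).
have z1 : (1 <= #|Z|)%N by exact: cardG_gt0.
have [y Gy nZSy] : exists2 y, y \in G & y \notin Z :|: S x.
  apply/subsetPn; apply/negP => sG.
  have := subset_leq_card sG; rewrite card_disjU ?ZS0 //.
  rewrite -(Lagrange (subsetIl G 'C[x])) => le.
  apply: (arith1 z1 (GC_index Gx nZx) _ le (card_S Gx nZx)).
  by rewrite subset_leq_card // ZsubC.
move: nZSy; rewrite inE negb_or => /andP[nZy nSy].
have dS : S x :&: S y = set0.
  apply/setP => w; rewrite inE in_set0; apply/andP => [[/imset2P[a g] + Gg ew]].
  rewrite inE => /andP[nZa Ca] /imset2P[b h]; rewrite inE => /andP[nZb Cb] Gh ew'.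
  have Ga : a \in G by move: Ca; rewrite inE => /andP[].
  have Gb : b \in G by move: Cb; rewrite inE => /andP[].
  have eC : 'C_G[x] :^ g = 'C_G[y] :^ h.
    by rewrite -(C_eq Gx nZx Ca nZa) -(C_eq Gy nZy Cb nZb) -!C_conj // -ew -ew'.
  have Gg' : g^-1 \in G by rewrite groupV.
  set c := (y ^ h) ^ g^-1.
  have Cc : c \in 'C_G[x].
    by rewrite /c -mem_conjg eC memJ_conjg inE Gy cent1id.
  have nZc : c \notin Z.
    by rewrite /c !memJ_norm ?(subsetP nZG) ?groupV.
  move/negP: nSy; apply; apply/imset2P; exists c (g * h^-1).
  - by rewrite inE nZc.
  - by rewrite groupM ?groupV.
  - by rewrite conjgM /c conjgKV conjgK.
have sU : Z :|: (S x :|: S y) \subset G.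
  by rewrite !subUset center_sub !S_sub.
have := subset_leq_card sU; rewrite !card_disjU //; last first.
  by rewrite setIUr !ZS0 setU0.
have := arith2 (i := #|G : 'C_G[x]|) z1 (CZ_card Gx nZx) (card_S Gx nZx).
have := arith2 (i := #|G : 'C_G[y]|) z1 (CZ_card Gy nZy) (card_S Gy nZy).
rewrite !Lagrange ?subsetIl //. move: z1. set a := #|G|. set b := #|Z|. set c := #|S x|. set d := #|S y|. lia.
Qed.

End T1.

Theorem exists_T1 (gT : finGroupType) (G : {group gT}) : ~~ abelian G ->
  exists Y : {group gT}, [/\ 'Z(G) \proper Y, Y \subset G & 'N_G(Y) != Y].
Proof.
move=> nabG.
case: (boolP [exists Y : {group gT}, [&& 'Z(G) \proper Y, Y \subset G & 'N_G(Y) != Y]]).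
  by case/existsP => Y /and3P[? ? ?]; exists Y.
rewrite negb_exists => /forallP H; exfalso; apply: (T1_false _ nabG).
move=> Y prY sYG; have := H Y; rewrite prY sYG /= negbK => /eqP.
done.
Qed.

Section Nil.
Variables (gT : finGroupType) (G : {group gT}).

Lemma cyc_proper x : ~~ abelian G -> x \in G -> <[x]> \proper G.
Proof.
move=> nabG Gx; rewrite properEneq cycle_subG Gx andbT.
by apply: contra nabG => /eqP <-; apply: cycle_abelian.
Qed.

Lemma nil_ns (Y : {group gT}) : nilpotent G -> Y \proper G -> Y :!=: 1 ->
  (Y : {set gT}) \in nonselfnorm_subgroups G.
Proof.
move=> nilG prY ntY; rewrite inE groupP (proper_sub prY) ntY /=.
have := nilpotent_proper_norm nilG prY; rewrite properEneq => /andP[ne _].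
by rewrite eq_sym.
Qed.

Lemma ntcyc x : x \notin 'Z(G) -> <[x]> :!=: 1.
Proof.
apply: contra => /eqP e; have : x \in <[x]> by apply: cycle_id.
by rewrite e inE => /eqP ->; apply: group1.
Qed.

Lemma nil_case : nilpotent G -> ~~ abelian G ->
  exists Y1 Y2 : {group gT},
   [/\ (Y1 : {set gT}) \in nonselfnorm_subgroups G, (Y2 : {set gT}) \in nonselfnorm_subgroups G,
       ~~ (Y1 \subset 'Z(G)), ~~ (Y2 \subset 'Z(G)) & Y1 :^: G != Y2 :^: G].
Proof.
move=> nilG nabG.
have [x Gx nZx] : exists2 x, x \in G & x \notin 'Z(G).
  apply/subsetPn; apply: contra nabG => sGZ.
  rewrite /abelian; exact: subset_trans sGZ (subsetIr _ _).
have prX := cyc_proper nabG Gx.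
have nzX : ~~ (<[x]> \subset 'Z(G)) by rewrite cycle_subG.
have nsX := nil_ns nilG prX (ntcyc nZx).
have [eXG | [M maxM sXM]] := maximal_exists (proper_sub prX).
  by move: prX; rewrite properE eXG subxx andbF.
have prM : M \proper G := maxgroupp maxM.
have nzM : ~~ (M \subset 'Z(G)) by apply: contra nzX; apply: subset_trans sXM.
have ntM : M :!=: 1 by apply: contra nzM => /eqP->; apply: sub1G.
have nsM := nil_ns nilG prM ntM.
have [eMX | neMX] := eqVneq (M : {set gT}) <[x]>; last first.
  exists <[x]>%G, M; split => //; apply/eqP => eC.
  have : (M : {set gT}) \in <[x]> :^: G by rewrite eC; apply/imsetP; exists 1; rewrite ?conjsg1.
  case/imsetP => g Gg eM; move/negP: neMX; apply.
  by rewrite eq_sym eqEcard sXM /= eM cardJg leqnn.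
(* <[x]> is maximal, hence normal *)
have nXG : G \subset 'N(<[x]>).
  have prN := nilpotent_proper_norm nilG prX.
  case/maxgroupP: maxM => _ /(_ 'N_G(<[x]>)%G) hM.
  have : ~~ ('N_G(<[x]>) \proper G).
    apply/negP => prN'.
    have sMN : M \subset 'N_G(<[x]>) by rewrite eMX (proper_sub prN).
    have eN : 'N_G(<[x]>) = M :> {set gT} by rewrite -(hM prN' sMN).
    by move: prN; rewrite eN eMX properE subxx andbF.
  rewrite properE subsetIl /= negbK => sGN; exact: subset_trans sGN (subsetIr _ _).
have [y0 Gy0 nXy0] : exists2 y, y \in G & y \notin <[x]>.
  by apply/subsetPn; move: prX; rewrite properE => /andP[].
have [y [Gy nXy nZy]] : exists y, [/\ y \in G, y \notin <[x]> & y \notin 'Z(G)].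
  case: (boolP (y0 \in 'Z(G))) => Zy0; last by exists y0.
  exists (x * y0); split; first by rewrite groupM.
    by rewrite groupMl ?cycle_id.
  by rewrite groupMr.
have prY := cyc_proper nabG Gy.
exists <[x]>%G, <[y]>%G; split => //.
- exact: nil_ns nilG prY (ntcyc nZy).
- by rewrite cycle_subG.
apply/eqP => eC.
have : <[y]> \in <[x]> :^: G by rewrite eC; apply/imsetP; exists 1; rewrite ?conjsg1.
case/imsetP => g Gg eY; move: nXy; rewrite -cycle_subG eY (normP (subsetP nXG g Gg)).
by rewrite subxx.
Qed.

End Nil.

Section CaseB.
Variables (gT : finGroupType) (G : {group gT}).

Lemma caseB_nil : 'Z(G) != 1 ->
  (forall x, x \in G -> x \notin 'Z(G) -> 'Z(G) \subset <[x]>) -> nilpotent G.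
Proof.
move=> ntZ HB.
have [eZ1 | [p p_pr p_dvd]] := trivgVpdiv 'Z(G).
  by move: ntZ; rewrite eZ1 eqxx.
rewrite -quotient_center_nil; apply: (pgroup_nil (p := p)).
have nZG : G \subset 'N('Z(G)) by exact: normal_norm (center_normal G).
have cG g pi : g \in G -> g.`_pi \in G.
  by move=> Gg; move: (cycle_constt pi g); apply/subsetP; rewrite cycle_subG.
have cpZ g : g \in G -> g.`_p^' \in 'Z(G).
  move=> Gg; apply/negPn/negP => nZ.
  have sZ := HB _ (cG g p^' Gg) nZ.
  have pd : p %| #[g.`_p^'] := dvdn_trans p_dvd (cardSg sZ).
  have pi_p : p \in \pi(#[g.`_p^']) by rewrite inE /= mem_primes p_pr order_gt0 pd.
  by move: (pnatPpi (p_elt_constt p^' g) pi_p); rewrite !inE eqxx.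
apply/pgroupP => q q_pr q_dvd.
have [u Qu ou] := Cauchy q_pr q_dvd.
case/morphimP: Qu => g Ng Gg eu.
have e : coset 'Z(G) g = coset 'Z(G) g.`_p.
  rewrite -{1}(consttC p g) morphM ?(subsetP nZG) ?cG //.
  by rewrite /= (coset_id (cpZ g Gg)) mulg1.
have pe : p.-elt (coset 'Z(G) g.`_p).
  exact: (@morph_p_elt _ _ _ (coset_morphism 'Z(G)) p _ (subsetP nZG _ (cG g p Gg)) (p_elt_constt p g)).
by move: pe; rewrite -e -eu /p_elt ou (pnatE _ q_pr).
Qed.

End CaseB.

Theorem mainTheorem11 (gT : finGroupType) (G : {group gT}) :
  ~~ abelian G -> 'Z(G) != 1 -> (calD 'Z(G) + 3 <= calD G)%N.
Proof.
move=> nabG ntZ.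
case: (boolP (nilpotent G)) => nilG.
  have [Y1 [Y2 [ns1 ns2 nz1 nz2 ne]]] := nil_case nilG nabG.
  have := count_final nabG ntZ ns1 ns2 nz1 nz2 ne. by [].
have [x [Gx nZx nsub]] : exists x, [/\ x \in G, x \notin 'Z(G) & ~~ ('Z(G) \subset <[x]>)].
  case: (boolP [exists (x | x \in G), (x \notin 'Z(G)) && ~~ ('Z(G) \subset <[x]>)]).
    by case/exists_inP => x Gx /andP[? ?]; exists x.
  rewrite negb_exists_in => /forall_inP H; case/negP: nilG; apply: caseB_nil ntZ _.
  move=> x Gx nZx; have := H x Gx; rewrite nZx /= negbK; done.
have [Y [prY sYG nNY]] := exists_T1 nabG.
have nZG : G \subset 'N('Z(G)) by exact: normal_norm (center_normal G).
apply: (count_final nabG ntZ (Y1 := <[x]>) (Y2 := Y)).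
- rewrite inE groupP cycle_subG Gx (ntcyc (G := G) nZx) /=.
  apply: contra nsub => /eqP e; rewrite -e subsetI center_sub cents_norm //.
  apply: subset_trans (subsetIr _ _) (centS _); by rewrite cycle_subG.
- rewrite inE groupP sYG nNY andbT /=.
  apply: contra ntZ => /eqP e; rewrite -subG1 -e; exact: proper_sub prY.
- by rewrite cycle_subG.
- by move: prY; rewrite properE => /andP[].
- apply/eqP => eC.
  have : (Y : {set gT}) \in <[x]> :^: G.
    by rewrite eC; apply/imsetP; exists 1; rewrite ?group1 ?conjsg1.
  case/imsetP => g Gg eY; case/negP: nsub.
  have sZ : 'Z(G) \subset <[x]> :^ g by rewrite -eY; exact: proper_sub prY.
  by rewrite -sub_conjgV (normP (subsetP nZG _ (groupVr Gg))) in sZ.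
Qed.
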